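(* Let $\mathcal{G}=(\mathcal{N},\mathcal{E})$ be a connected undirected graph with $\mathcal{N}=\{1,\dots,N\}$, $\omega_1,\dots,\omega_N\in\mathbb{R}$, and $\{\Delta_{ij}\}$ a formation (real $\Delta_{ij}$ for each ordered pair with $\{i,j\}\in\mathcal{E}$, $\Delta_{ji}=-\Delta_{ij}$) with $\Delta_{ij}\not\equiv 0,\pi\pmod{2\pi}$ for all edges. Let $\bar\omega\in\mathbb{R}$, let $\mathcal{E}=\mathcal{E}^a\sqcup\mathcal{E}^r$ be a partition, $\mathcal{N}_i^a=\{j:\{i,j\}\in\mathcal{E}^a\}$, $\mathcal{N}_i^r=\{j:\{i,j\}\in\mathcal{E}^r\}$, and fix one attractive coupling function $f^*$ and one repulsive coupling function $g^*$. Put $f^*_{ij}:=f^*(\Delta_{ij})$ for $j\in\mathcal{N}_i^a$ and $g^*_{ij}:=g^*(\Delta_{ij})$ for $j\in\mathcal{N}_i^r$, and define $\mathcal{N}_i^{a,+}=\{j\in\mathcal{N}_i^a:\operatorname{sgn}(\bar\omega-\omega_i)=\operatorname{sgn}(f^*_{ij})\}$, $\mathcal{N}_i^{a,-}=\{j\in\mathcal{N}_i^a:\operatorname{sgn}(\bar\omega-\omega_i)=-\operatorname{sgn}(f^*_{ij})\}$, $\mathcal{N}_i^{r,+}=\{j\in\mathcal{N}_i^r:\operatorname{sgn}(\bar\omega-\omega_i)=\operatorname{sgn}(g^*_{ij})\}$, $\mathcal{N}_i^{r,-}=\{j\in\mathcal{N}_i^r:\operatorname{sgn}(\bar\omega-\omega_i)=-\operatorname{sgn}(g^*_{ij})\}$.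 Assume that for each $i\in\mathcal{N}$ the set $\mathcal{N}_i^+:=\mathcal{N}_i^{a,+}\cup\mathcal{N}_i^{r,+}$ is non-empty, and let $S_i:=\sum_{j\in\mathcal{N}_i^{a,+}}(f^*_{ij})^2+\sum_{j\in\mathcal{N}_i^{r,+}}(g^*_{ij})^2$. Consider the equations $$(\ast)\qquad \bar\omega-\omega_i=\sum_{j\in\mathcal{N}_i^a}\alpha_{ij}f^*_{ij}+\sum_{j\in\mathcal{N}_i^r}\beta_{ij}g^*_{ij},\qquad i\in\mathcal{N},$$ in unknowns $\alpha_{ij}$ ($i\in\mathcal{N}$, $j\in\mathcal{N}_i^a$) and $\beta_{ij}$ ($i\in\mathcal{N}$, $j\in\mathcal{N}_i^r$), with energy $E(\alpha,\beta)=\sum_{i\in\mathcal{N}}\big(\sum_{j\in\mathcal{N}_i^a}\alpha_{ij}^2+\sum_{j\in\mathcal{N}_i^r}\beta_{ij}^2\big)$. Then: (i) there exist $\alpha_{ij}>0$ and $\beta_{ij}>0$ satisfying $(\ast)$; (ii) for $\epsilon>0$ define $\alpha^\epsilon_{ij}=\epsilon$ for $j\in\mathcal{N}_i^{a,-}$, $\alpha^\epsilon_{ij}=|\bar\omega-\omega_i|\,|f^*_{ij}|/S_i$ for $j\in\mathcal{N}_i^{a,+}$, $\beta^\epsilon_{ij}=\epsilon$ for $j\in\mathcal{N}_i^{r,-}$, $\beta^\epsilon_{ij}=|\bar\omega-\omega_i|\,|g^*_{ij}|/S_i$ for $j\in\mathcal{N}_i^{r,+}$. Then every positive solution $(\alpha,\beta)$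 of $(\ast)$ satisfies $E(\alpha,\beta)\ge E_0:=\sum_{i\in\mathcal{N}}(\bar\omega-\omega_i)^2/S_i$, the infimum of $E$ over positive solutions of $(\ast)$ equals $E_0$, and as $\epsilon\to 0^+$ the family $(\alpha^\epsilon,\beta^\epsilon)$ satisfies $(\ast)$ up to an error tending to $0$ and $E(\alpha^\epsilon,\beta^\epsilon)\to E_0$; i.e. $(\alpha^\epsilon,\beta^\epsilon)$ is a minimum-energy solution up to arbitrary precision.
   Context: An attractive coupling function is a $2\pi$-periodic function $f:\mathbb{R}\to\mathbb{R}$, twice differentiable on $(-\pi,\pi)$, with $f(0)=0$, $f'>0$ on $(-\pi,\pi)$, $f(t)\to-\infty$ as $t\to(2n+1)\pi^+$ and $f(t)\to+\infty$ as $t\to(2n+1)\pi^-$ for every integer $n$. A repulsive coupling function is a $2\pi$-periodic $g:\mathbb{R}\to\mathbb{R}$, twice differentiable on $(0,2\pi)$, with $g(\pi)=0$, $g'>0$ on $(0,2\pi)$, $g(t)\to-\infty$ as $t\to 2n\pi^+$ and $g(t)\to+\infty$ as $t\to 2n\pi^-$ for every integer $n$. The coupling functions on the network are the scaled prototypes $f_{ij}=\alpha_{ij}f^*$ (attractive edges) and $g_{ij}=\beta_{ij}g^*$ (repulsive edges), so $(\ast)$ is the condition that the formation moving rigidly with frequency $\bar\omega$ solves $\dot\theta_i=\omega_i+\sum_{j\in\mathcal{N}_i^a}f_{ij}(\theta_j-\theta_i)+\sum_{j\in\mathcal{N}_i^r}g_{ij}(\theta_j-\theta_i)$. Here $\operatorname{sgn}$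 is the sign function with $\operatorname{sgn}(0)=0$. *)

(* Defs.v *)
From HB Require Import structures.
From mathcomp Require Import all_boot all_order all_algebra.
From mathcomp Require Import all_classical all_reals all_analysis.
Set Implicit Arguments. Unset Strict Implicit. Unset Printing Implicit Defensive.
Import Order.TTheory GRing.Theory Num.Theory.
Import numFieldNormedType.Exports.
Local Open Scope classical_set_scope.
Local Open Scope ring_scope.

Definition attractive {R : realType} (f : R -> R) : Prop :=
  [/\ (forall t, f (t + 2 * pi) = f t),
      (forall t, - pi < t < pi -> derivable f t 1 /\ derivable (derive1 f) t 1),
      f 0 = 0,
      (forall t, - pi < t < pi -> 0 < derive1 f t) &
      (forall n : int,
          f x @[x --> ((2 * n%:~R + 1) * pi)^'+] --> -oo /\
          f x @[x --> ((2 * n%:~R + 1) * pi)^'-] --> +oo)].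

Definition repulsive {R : realType} (g : R -> R) : Prop :=
  [/\ (forall t, g (t + 2 * pi) = g t),
      (forall t, 0 < t < 2 * pi -> derivable g t 1 /\ derivable (derive1 g) t 1),
      g pi = 0,
      (forall t, 0 < t < 2 * pi -> 0 < derive1 g t) &
      (forall n : int,
          g x @[x --> (2 * n%:~R * pi)^'+] --> -oo /\
          g x @[x --> (2 * n%:~R * pi)^'-] --> +oo)].

Definition undirected_graph {N : nat} (E : rel 'I_N) : Prop :=
  (forall i j, E i j = E j i) /\ (forall i, ~~ E i i).

Definition connected_graph {N : nat} (E : rel 'I_N) : Prop :=
  forall i j : 'I_N, connect E i j.

Definition formation {R : realType} {N : nat} (E : rel 'I_N)
  (Delta : 'I_N -> 'I_N -> R) : Prop :=
  forall i j, E i j -> Delta j i = - Delta i j.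

Definition not_0_pi_mod_2pi {R : realType} (d : R) : Prop :=
  forall k : int, d <> 2 * k%:~R * pi /\ d <> pi + 2 * k%:~R * pi.

Definition Nap {R : realType} {N : nat} (Ea : rel 'I_N) (w : 'I_N -> R) (wb : R)
  (Delta : 'I_N -> 'I_N -> R) (fs : R -> R) (i j : 'I_N) : bool :=
  Ea i j && (Num.sg (wb - w i) == Num.sg (fs (Delta i j))).
Definition Nam {R : realType} {N : nat} (Ea : rel 'I_N) (w : 'I_N -> R) (wb : R)
  (Delta : 'I_N -> 'I_N -> R) (fs : R -> R) (i j : 'I_N) : bool :=
  Ea i j && (Num.sg (wb - w i) == - Num.sg (fs (Delta i j))).
(* the r-versions are the same definitions applied to (Er, gs) *)

Definition Ssum {R : realType} {N : nat} (Ea Er : rel 'I_N) (w : 'I_N -> R) (wb : R)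
  (Delta : 'I_N -> 'I_N -> R) (fs gs : R -> R) (i : 'I_N) : R :=
  \sum_(j | Nap Ea w wb Delta fs i j) (fs (Delta i j)) ^+ 2
  + \sum_(j | Nap Er w wb Delta gs i j) (gs (Delta i j)) ^+ 2.

Definition rhs {R : realType} {N : nat} (Ea Er : rel 'I_N)
  (Delta : 'I_N -> 'I_N -> R) (fs gs : R -> R)
  (alpha beta : 'I_N -> 'I_N -> R) (i : 'I_N) : R :=
  \sum_(j | Ea i j) alpha i j * fs (Delta i j)
  + \sum_(j | Er i j) beta i j * gs (Delta i j).

Definition pos_solution {R : realType} {N : nat} (Ea Er : rel 'I_N)
  (w : 'I_N -> R) (wb : R) (Delta : 'I_N -> 'I_N -> R) (fs gs : R -> R)
  (alpha beta : 'I_N -> 'I_N -> R) : Prop :=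
  (forall i j, Ea i j -> 0 < alpha i j) /\
  (forall i j, Er i j -> 0 < beta i j) /\
  (forall i, wb - w i = rhs Ea Er Delta fs gs alpha beta i).

Definition energy {R : realType} {N : nat} (Ea Er : rel 'I_N)
  (alpha beta : 'I_N -> 'I_N -> R) : R :=
  \sum_(i < N) (\sum_(j | Ea i j) (alpha i j) ^+ 2
                + \sum_(j | Er i j) (beta i j) ^+ 2).

Definition E0 {R : realType} {N : nat} (Ea Er : rel 'I_N) (w : 'I_N -> R) (wb : R)
  (Delta : 'I_N -> 'I_N -> R) (fs gs : R -> R) : R :=
  \sum_(i < N) (wb - w i) ^+ 2 / Ssum Ea Er w wb Delta fs gs i.

(* The family alpha^eps (resp. beta^eps, taking (Er, gs)); the value
   outside N_i^{a,+} and N_i^{a,-} is irrelevant (set to 0). *)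
Definition weps {R : realType} {N : nat} (Ea Er : rel 'I_N) (w : 'I_N -> R) (wb : R)
  (Delta : 'I_N -> 'I_N -> R) (fs gs : R -> R) (hs : R -> R) (Eh : rel 'I_N)
  (eps : R) (i j : 'I_N) : R :=
  if Nam Eh w wb Delta hs i j then eps
  else if Nap Eh w wb Delta hs i j then
    `|wb - w i| * `|hs (Delta i j)| / Ssum Ea Er w wb Delta fs gs i
  else 0.

(* Main.v *)
Require Import Defs.
From HB Require Import structures.
From mathcomp Require Import all_boot all_order all_algebra.
From mathcomp Require Import all_classical all_reals all_analysis.
From mathcomp Require Import lra ring.
Import Order.TTheory GRing.Theory Num.Theory.
Import numFieldNormedType.Exports.
Local Open Scope classical_set_scope.
Local Open Scope ring_scope.

Section Analytic.
Variable R : realType.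

Lemma per_nat (h : R -> R) p : (forall t, h (t + p) = h t) ->
  forall (n : nat) t, h (t + n%:R * p) = h t.
Proof.
move=> hp; elim=> [|n IH] t; first by rewrite mul0r addr0.
by rewrite mulrSr mulrDl mul1r addrA hp IH.
Qed.

Lemma per_int (h : R -> R) p : (forall t, h (t + p) = h t) ->
  forall (k : int) t, h (t + k%:~R * p) = h t.
Proof.
move=> hp [n|n] t; first by rewrite -pmulrn per_nat.
rewrite NegzE mulrNz -pmulrn mulNr.
by rewrite -[in RHS](subrK (n.+1%:R * p) t) per_nat.
Qed.

Lemma reduce (p a t : R) : 0 < p -> exists k : int, a <= t - k%:~R * p < a + p.
Proof.
move=> p0; exists (Num.floor ((t - a) / p)).
have /andP[h1 h2] := floor_itv ((t - a) / p).
move: h1 h2; set k := Num.floor _ => h1 h2.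
rewrite intrD in h2.
rewrite ler_pdivlMr // in h1; rewrite ltr_pdivrMr // in h2.
apply/andP; split; lra.
Qed.

Lemma mono (h : R -> R) (a b x y : R) :
  (forall t, a < t < b -> derivable h t 1) ->
  (forall t, a < t < b -> 0 < derive1 h t) ->
  a < x -> x < y -> y < b -> h x < h y.
Proof.
move=> dh ph ax xy yb.
have dxy : forall t, t \in `]x, y[ -> derivable h t 1.
  move=> t; rewrite in_itv /= => /andP[t1 t2]; apply: dh; apply/andP; split; lra.
have pxy : forall t, t \in `]x, y[ -> 0 < derive1 h t.
  move=> t; rewrite in_itv /= => /andP[t1 t2]; apply: ph; apply/andP; split; lra.
apply: (@gtr0_derive1_lt_cc _ h x y dxy pxy).
- apply: derivable_within_continuous => t; rewrite in_itv /= => /andP[t1 t2].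
  apply: dh; apply/andP; split; lra.
- by rewrite in_itv /= lexx (ltW xy).
- by rewrite in_itv /= lexx (ltW xy).
- exact: xy.
Qed.

Lemma attractive_neq0 (f : R -> R) t : attractive f -> not_0_pi_mod_2pi t -> f t != 0.
Proof.
case=> fp fd f0 fpos _ nt.
have pi0 : 0 < (pi : R) := pi_gt0 R.
have [k /andP[k1 k2]] := @reduce (2 * pi) (- pi) t (mulr_gt0 (ltr0n _ 2) pi0).
have -> : f t = f (t - k%:~R * (2 * pi)).
  by rewrite -(@per_int f _ fp k (t - _)) subrK.
set u := t - _ in k1 k2 *.
have [h1 h2] := nt k.
have un : u != - pi.
  apply/eqP => ue; have [_ h3] := nt (k - 1); apply: h3; rewrite intrD /=.
  have : t = u + k%:~R * (2 * pi) by rewrite /u subrK.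
  rewrite ue => ->; rewrite (_ : (-1)%:~R = -1 :> R) //; lra.
have u0 : u != 0.
  apply/eqP => ue; apply: h1.
  have : t = u + k%:~R * (2 * pi) by rewrite /u subrK.
  rewrite ue => ->; lra.
have dd : forall x, - pi < x < pi -> derivable f x 1 by move=> x /fd[].
have [ul|ug] := ltP u 0.
- apply: ltr0_neq0; rewrite -f0; apply: (@mono f (- pi) pi _ _ dd fpos) => //.
  by rewrite lt_neqAle eq_sym un.
- apply: lt0r_neq0; rewrite -f0; apply: (@mono f (- pi) pi _ _ dd fpos) => //.
  + lra.
  + by rewrite lt_neqAle eq_sym u0.
  + lra.
Qed.

Lemma repulsive_neq0 (g : R -> R) t : repulsive g -> not_0_pi_mod_2pi t -> g t != 0.
Proof.
case=> gp gd g0 gpos _ nt.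
have pi0 : 0 < (pi : R) := pi_gt0 R.
have [k /andP[k1 k2]] := @reduce (2 * pi) 0 t (mulr_gt0 (ltr0n _ 2) pi0).
have -> : g t = g (t - k%:~R * (2 * pi)).
  by rewrite -(@per_int g _ gp k (t - _)) subrK.
set u := t - _ in k1 k2 *.
have [h1 h2] := nt k.
have up : u != pi.
  apply/eqP => ue; apply: h2.
  have : t = u + k%:~R * (2 * pi) by rewrite /u subrK.
  rewrite ue => ->; lra.
have u0 : u != 0.
  apply/eqP => ue; apply: h1.
  have : t = u + k%:~R * (2 * pi) by rewrite /u subrK.
  rewrite ue => ->; lra.
have dd : forall x, 0 < x < 2 * pi -> derivable g x 1 by move=> x /gd[].
have [ul|ug] := ltP u pi.
- apply: ltr0_neq0; rewrite -g0; apply: (@mono g 0 (2 * pi) _ _ dd gpos) => //.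
  by rewrite lt_neqAle eq_sym u0.
  lra.
- apply: lt0r_neq0; rewrite -g0; apply: (@mono g 0 (2 * pi) _ _ dd gpos) => //.
  + by rewrite lt_neqAle eq_sym up.
  + lra.
Qed.

End Analytic.
Section Signs.
Variable R : realType.

Lemma sg_neq_le0 (x y : R) : Num.sg x != Num.sg y -> Num.sg x * y <= 0.
Proof.
case: (ltrgtP x 0) => hx; case: (ltrgtP y 0) => hy;
  rewrite ?(ltr0_sg hx) ?(gtr0_sg hx) ?(ltr0_sg hy) ?(gtr0_sg hy) ?hx ?hy ?sgr0 //=;
  rewrite ?eqxx //; try lra.
Qed.


Lemma sg_eq_mul (x y : R) : Num.sg x = Num.sg y -> Num.sg x * y = `|y|.
Proof.
move=> ->; case: (ltrgtP y 0) => hy.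
- by rewrite ltr0_sg // ltr0_norm // mulN1r.
- by rewrite gtr0_sg // gtr0_norm // mul1r.
- by rewrite hy sgr0 mul0r normr0.
Qed.

Lemma sg_opp (x y : R) : x != 0 -> y != 0 -> Num.sg x != Num.sg y ->
  Num.sg y = - Num.sg x.
Proof.
case: (ltrgtP x 0) => hx; case: (ltrgtP y 0) => hy;
  rewrite ?(ltr0_sg hx) ?(gtr0_sg hx) ?(ltr0_sg hy) ?(gtr0_sg hy) ?hx ?hy ?eqxx //=;
  rewrite ?opprK // => _ _; rewrite ?eqxx //.
Qed.
End Signs.
Arguments sg_neq_le0 {R}.
Arguments sg_eq_mul {R}.
Arguments sg_opp {R}.

Section Main.
Variables (R : realType) (N : nat) (Ea Er : rel 'I_N) (w : 'I_N -> R)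
  (Delta : 'I_N -> 'I_N -> R) (wb : R) (fs gs : R -> R).

Definition pp (h : R -> R) (i j : 'I_N) : bool :=
  Num.sg (wb - w i) == Num.sg (h (Delta i j)).
Definition Sh (h : R -> R) (Eh : rel 'I_N) i : R :=
  \sum_(j | Nap Eh w wb Delta h i j) h (Delta i j) ^+ 2.
Definition Mh (h : R -> R) (Eh : rel 'I_N) i : R :=
  \sum_(j | Eh i j && ~~ pp h i j) `|h (Delta i j)|.
Definition Kh (h : R -> R) (Eh : rel 'I_N) i : R :=
  \sum_(j | Eh i j && ~~ pp h i j) 1.
Definition fam (h : R -> R) (Eh : rel 'I_N) (c : 'I_N -> R) (eps : R) i j : R :=
  if Nap Eh w wb Delta h i j then c i * `|h (Delta i j)| else eps.

Lemma Nap_pp (h : R -> R) (Eh : rel _) i j : Nap Eh w wb Delta h i j = Eh i j && pp h i j.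
Proof. by []. Qed.

Lemma side_rhs (h : R -> R) (Eh : rel _) (c : _ -> R) (eps : R) i :
  (forall j, Eh i j -> h (Delta i j) != 0) -> wb - w i != 0 ->
  \sum_(j | Eh i j) fam h Eh c eps i j * h (Delta i j) =
  Num.sg (wb - w i) * (c i * Sh h Eh i - eps * Mh h Eh i).
Proof.
move=> hn dn.
rewrite (bigID (pp h i)) /= /Sh /Mh.
under eq_bigr => j /andP[ej pj].
  rewrite /fam Nap_pp ej pj /= -mulrA.
  have -> : `|h (Delta i j)| * h (Delta i j) = Num.sg (wb - w i) * h (Delta i j) ^+ 2.
    by rewrite expr2 mulrA (sg_eq_mul _ _ (eqP pj)).
  over.
under [X in _ + X = _]eq_bigr => j /andP[ej pj].
  rewrite /fam Nap_pp ej (negbTE pj) /=.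
  have -> : h (Delta i j) = - (Num.sg (wb - w i) * `|h (Delta i j)|).
    by rewrite -mulNr -(sg_opp _ _ dn (hn j ej) pj) mulr_sg_norm.
  over.
rewrite -(eq_bigl _ _ (fun j => Nap_pp h Eh i j)).
rewrite /=.
under eq_bigr do rewrite mulrA (mulrC (c i)) -mulrA.
under [X in _ + X = _]eq_bigr do rewrite mulrN mulrA (mulrC eps) -mulrA.
rewrite -mulr_sumr sumrN -mulr_sumr -mulr_sumr -mulr_sumr; ring.
Qed.


Lemma side_energy (h : R -> R) (Eh : rel _) (c : _ -> R) (eps : R) i :
  \sum_(j | Eh i j) fam h Eh c eps i j ^+ 2 =
  c i ^+ 2 * Sh h Eh i + eps ^+ 2 * Kh h Eh i.
Proof.
rewrite (bigID (pp h i)) /= /Sh /Kh.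
under eq_bigr => j /andP[ej pj].
  rewrite /fam Nap_pp ej pj /= exprMn real_normK ?num_real //.
  over.
under [X in _ + X = _]eq_bigr => j /andP[ej pj].
  rewrite /fam Nap_pp ej (negbTE pj) /= -[eps ^+ 2]mulr1.
  over.
rewrite -(eq_bigl _ _ (fun j => Nap_pp h Eh i j)) /=.
by rewrite -!mulr_sumr.
Qed.

Lemma weps_fam (h : R -> R) (Eh : rel _) (eps : R) i j :
  h (Delta i j) != 0 -> wb - w i != 0 -> Eh i j ->
  weps Ea Er w wb Delta fs gs h Eh eps i j =
  fam h Eh (fun i => `|wb - w i| / Ssum Ea Er w wb Delta fs gs i) eps i j.
Proof.
move=> hn dn ej; rewrite /weps /fam /Nam Nap_pp ej /=.
case: (boolP (pp h i j)) => pj /=.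
- case: eqP => [e|_]; last by rewrite mulrAC.
  exfalso; move: pj; rewrite /pp e => /eqP e2.
  have : Num.sg (h (Delta i j)) = 0 by lra.
  by move/eqP; rewrite sgr_eq0 (negbTE hn).
- by rewrite (sg_opp _ _ dn hn pj) opprK eqxx.
Qed.

Lemma side_lb1 (h : R -> R) (Eh : rel _) (al : 'I_N -> 'I_N -> R) i :
  (forall j, Eh i j -> 0 < al i j) ->
  Num.sg (wb - w i) * \sum_(j | Eh i j) al i j * h (Delta i j) <=
  \sum_(j | Nap Eh w wb Delta h i j) al i j * `|h (Delta i j)|.
Proof.
move=> ap; rewrite mulr_sumr (bigID (pp h i)) /=.
rewrite -(eq_bigl _ _ (fun j => Nap_pp h Eh i j)) /=.
rewrite -[X in _ <= X]addr0; apply: lerD.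
- apply: ler_sum => j /andP[ej pj].
  by rewrite mulrCA (sg_eq_mul _ _ (eqP pj)).
- apply: sumr_le0 => j /andP[ej pj].
  rewrite mulrCA; apply: mulr_ge0_le0; first exact: ltW (ap j ej).
  exact: sg_neq_le0.
Qed.

Lemma side_lb2 (h : R -> R) (Eh : rel _) (al : 'I_N -> 'I_N -> R) i (c : R) :
  0 <= \sum_(j | Nap Eh w wb Delta h i j) al i j ^+ 2
     - 2 * c * \sum_(j | Nap Eh w wb Delta h i j) al i j * `|h (Delta i j)|
     + c ^+ 2 * Sh h Eh i.
Proof.
rewrite /Sh !mulr_sumr -sumrN -!big_split /=.
apply: sumr_ge0 => j _.
have -> : al i j ^+ 2 - 2 * c * (al i j * `|h (Delta i j)|) + c ^+ 2 * h (Delta i j) ^+ 2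
  = (al i j - c * `|h (Delta i j)|) ^+ 2.
  rewrite -(real_normK (num_real (h (Delta i j)))); ring.
exact: sqr_ge0.
Qed.

Lemma side_lb3 (h : R -> R) (Eh : rel _) (al : 'I_N -> 'I_N -> R) i :
  \sum_(j | Nap Eh w wb Delta h i j) al i j ^+ 2 <= \sum_(j | Eh i j) al i j ^+ 2.
Proof.
rewrite [X in _ <= X](bigID (pp h i)) /=.
rewrite -(eq_bigl _ _ (fun j => Nap_pp h Eh i j)) /=.
rewrite lerDl; apply: sumr_ge0 => j _; exact: sqr_ge0.
Qed.

End Main.

Arguments pp {R N}. Arguments Sh {R N}. Arguments Mh {R N}. Arguments Kh {R N}.
Arguments fam {R N}.
Arguments side_rhs {R N}. Arguments side_energy {R N}. Arguments weps_fam {R N}.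
Arguments side_lb1 {R N}. Arguments side_lb2 {R N}. Arguments side_lb3 {R N}.

Lemma poly_lim (R : realType) (a b c : R) :
  (a + b * x + c * x ^+ 2) @[x --> 0^'+] --> a.
Proof.
apply: cvg_at_right_filter.
suff H : (a + b * x + c * x ^+ 2) @[x --> (0:R)] --> a + b * 0 + c * 0 ^+ 2.
  by rewrite mulr0 expr0n /= mulr0 !addr0 in H.
apply: cvgD; first apply: cvgD.
- exact: cvg_cst.
- apply: cvgMl_tmp; exact: cvg_id.
- apply: cvgMl_tmp; rewrite expr2; apply: cvgM; exact: cvg_id.
Qed.

Theorem theorem4 (R : realType) (N : nat) (E Ea Er : rel 'I_N)
  (w : 'I_N -> R) (Delta : 'I_N -> 'I_N -> R) (wb : R) (fs gs : R -> R) :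
  undirected_graph E -> connected_graph E ->
  formation E Delta ->
  (forall i j, E i j -> not_0_pi_mod_2pi (Delta i j)) ->
  (* partition E = E^a disjoint-union E^r *)
  (forall i j, E i j = Ea i j || Er i j) ->
  (forall i j, ~~ (Ea i j && Er i j)) ->
  attractive fs -> repulsive gs ->
  (* N_i^+ = N_i^{a,+} U N_i^{r,+} is non-empty for every i *)
  (forall i, exists j, Nap Ea w wb Delta fs i j || Nap Er w wb Delta gs i j) ->
  let alpha_eps := weps Ea Er w wb Delta fs gs fs Ea in
  let beta_eps := weps Ea Er w wb Delta fs gs gs Er in
  let e0 := E0 Ea Er w wb Delta fs gs in
  (* (i) *)
  (exists alpha beta, pos_solution Ea Er w wb Delta fs gs alpha beta) /\
  (* (ii) *)
  (forall alpha beta, pos_solution Ea Er w wb Delta fs gs alpha beta ->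
     e0 <= energy Ea Er alpha beta) /\
  inf [set x | exists alpha beta,
          pos_solution Ea Er w wb Delta fs gs alpha beta /\
          x = energy Ea Er alpha beta] = e0 /\
  (forall eps, 0 < eps ->
     (forall i j, Ea i j -> 0 < alpha_eps eps i j) /\
     (forall i j, Er i j -> 0 < beta_eps eps i j)) /\
  (forall i, (wb - w i - rhs Ea Er Delta fs gs (alpha_eps eps) (beta_eps eps) i)
               @[eps --> 0^'+] --> 0) /\
  energy Ea Er (alpha_eps eps) (beta_eps eps) @[eps --> 0^'+] --> e0.
Proof.
move=> _ _ _ Hnd Hpart _ Hf Hg Hne alpha_eps beta_eps e0.
have fn : forall i j, Ea i j -> fs (Delta i j) != 0.
  by move=> i j e; apply: attractive_neq0 Hf _; apply: Hnd; rewrite Hpart e.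
have gn : forall i j, Er i j -> gs (Delta i j) != 0.
  by move=> i j e; apply: repulsive_neq0 Hg _; apply: Hnd; rewrite Hpart e orbT.
have dn : forall i, wb - w i != 0.
  move=> i; have [j /orP[|]] := Hne i; rewrite /Nap => /andP[e /eqP s];
  rewrite -sgr_eq0 s sgr_eq0; [exact: fn|exact: gn].
pose S i := Ssum Ea Er w wb Delta fs gs i.
have Spos : forall i, 0 < S i.
  move=> i; have [j hj] := Hne i; rewrite /S /Ssum.
  have h1 : 0 <= \sum_(j | Nap Ea w wb Delta fs i j) fs (Delta i j) ^+ 2.
    by apply: sumr_ge0 => k _; exact: sqr_ge0.
  have h2 : 0 <= \sum_(j | Nap Er w wb Delta gs i j) gs (Delta i j) ^+ 2.
    by apply: sumr_ge0 => k _; exact: sqr_ge0.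
  case/orP: hj => hj.
  - have : 0 < \sum_(j | Nap Ea w wb Delta fs i j) fs (Delta i j) ^+ 2.
      rewrite (bigD1 j) //=; apply: ltr_pwDl.
        by rewrite lt_def sqrf_eq0 fn ?sqr_ge0 //; case/andP: hj.
      by apply: sumr_ge0 => k _; exact: sqr_ge0.
    lra.
  - have : 0 < \sum_(j | Nap Er w wb Delta gs i j) gs (Delta i j) ^+ 2.
      rewrite (bigD1 j) //=; apply: ltr_pwDl.
        by rewrite lt_def sqrf_eq0 gn ?sqr_ge0 //; case/andP: hj.
      by apply: sumr_ge0 => k _; exact: sqr_ge0.
    lra.
have Sn : forall i, S i != 0 by move=> i; exact: lt0r_neq0.
have SE : forall i, S i = Sh w Delta wb fs Ea i + Sh w Delta wb gs Er i by [].
pose M i := Mh w Delta wb fs Ea i + Mh w Delta wb gs Er i.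
pose K i := Kh w Delta wb fs Ea i + Kh w Delta wb gs Er i.
have M0 : forall i, 0 <= M i.
  by move=> i; apply: addr_ge0; apply: sumr_ge0 => j _; exact: normr_ge0.
have K0 : forall i, 0 <= K i.
  by move=> i; apply: addr_ge0; apply: sumr_ge0 => j _; exact: ler01.
have fam_pos : forall (c : 'I_N -> R) eps, 0 < eps -> (forall i, 0 < c i) ->
   (forall i j, Ea i j -> 0 < fam w Delta wb fs Ea c eps i j) /\
   (forall i j, Er i j -> 0 < fam w Delta wb gs Er c eps i j).
  move=> c eps e0p cp; split => i j e; rewrite /fam; case: ifP => _ //;
  apply: mulr_gt0 => //; rewrite normr_gt0; [exact: fn|exact: gn].
have fam_rhs : forall (c : 'I_N -> R) eps i,
   rhs Ea Er Delta fs gs (fam w Delta wb fs Ea c eps) (fam w Delta wb gs Er c eps) i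
   = Num.sg (wb - w i) * (c i * S i - eps * M i).
  move=> c eps i; rewrite /rhs (side_rhs _ _ _ _ _ _ _ _ (fn i)) ?dn //.
  rewrite (side_rhs _ _ _ _ _ _ _ _ (gn i)) ?dn // SE /M; ring.
have fam_energy : forall (c : 'I_N -> R) eps,
   energy Ea Er (fam w Delta wb fs Ea c eps) (fam w Delta wb gs Er c eps)
   = \sum_(i < N) (c i ^+ 2 * S i + eps ^+ 2 * K i).
  move=> c eps; apply: eq_bigr => i _.
  rewrite !side_energy SE /K; ring.

have sgd : forall i, Num.sg (wb - w i) * `|wb - w i| = wb - w i.
  by move=> i; exact: mulr_sg_norm.
have dpos : forall i, 0 < `|wb - w i| by move=> i; rewrite normr_gt0.
pose cex eps i := (`|wb - w i| + eps * M i) / S i.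
have cex_pos : forall eps, 0 < eps -> forall i, 0 < cex eps i.
  move=> eps ep i; apply: divr_gt0 (Spos i).
  have := M0 i; have := dpos i; nra.
pose al eps := fam w Delta wb fs Ea (cex eps) eps.
pose be eps := fam w Delta wb gs Er (cex eps) eps.
have ex_sol : forall eps, 0 < eps ->
    pos_solution Ea Er w wb Delta fs gs (al eps) (be eps).
  move=> eps ep; have [h1 h2] := fam_pos (cex eps) eps ep (cex_pos eps ep).
  split; first exact: h1; split; first exact: h2.
  move=> i; rewrite fam_rhs /cex divfK ?Sn // addrK mulr_sg_norm //.
pose A i := (wb - w i) ^+ 2 / S i.
pose B i := 2 * `|wb - w i| * M i / S i.
pose C i := M i ^+ 2 / S i + K i.
have ex_energy : forall eps, energy Ea Er (al eps) (be eps) =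
    e0 + eps * (\sum_(i < N) B i) + eps ^+ 2 * (\sum_(i < N) C i).
  move=> eps; rewrite fam_energy /e0 /E0 !mulr_sumr -!big_split /=.
  apply: eq_bigr => i _; rewrite /cex /A /B /C -/(S i).
  rewrite -[(wb - w i) ^+ 2](real_normK (num_real _)).
  by field; rewrite Sn.
have B0 : 0 <= \sum_(i < N) B i.
  apply: sumr_ge0 => i _; apply: divr_ge0 (ltW (Spos i)).
  have := M0 i; have := dpos i; nra.
have C0 : 0 <= \sum_(i < N) C i.
  apply: sumr_ge0 => i _; apply: addr_ge0 (K0 i); apply: divr_ge0 (ltW (Spos i)).
  exact: sqr_ge0.
have lb : forall alpha beta, pos_solution Ea Er w wb Delta fs gs alpha beta ->
     e0 <= energy Ea Er alpha beta.
  move=> alpha beta [ap [bp sol]]; apply: ler_sum => i _.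
  set c := `|wb - w i| / S i.
  have H1a := side_lb1 w Delta wb fs Ea alpha i (ap i).
  have H1r := side_lb1 w Delta wb gs Er beta i (bp i).
  have H2a := side_lb2 w Delta wb fs Ea alpha i c.
  have H2r := side_lb2 w Delta wb gs Er beta i c.
  have H3a := side_lb3 w Delta wb fs Ea alpha i.
  have H3r := side_lb3 w Delta wb gs Er beta i.
  have Hd : `|wb - w i| <= \sum_(j | Nap Ea w wb Delta fs i j) alpha i j * `|fs (Delta i j)|
      + \sum_(j | Nap Er w wb Delta gs i j) beta i j * `|gs (Delta i j)|.
    rewrite -(sg_eq_mul _ _ (erefl (Num.sg (wb - w i)))) {2}sol /rhs mulrDr.
    exact: lerD.
  have c0 : 0 <= c by apply: divr_ge0 (ltW (Spos i)); exact: normr_ge0.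
  have cS : c * S i = `|wb - w i| by rewrite /c divfK.
  have Hc := ler_wpM2l c0 Hd.
  have -> : (wb - w i) ^+ 2 / S i = c * `|wb - w i|.
    by rewrite -[(wb - w i) ^+ 2](real_normK (num_real _)) /c expr2 mulrAC mulrC.
  have c2S : c ^+ 2 * (Sh w Delta wb fs Ea i + Sh w Delta wb gs Er i) = c * `|wb - w i|.
    by rewrite -SE expr2 -mulrA cS.
  move: c2S; rewrite mulrDr => c2S.
  lra.
split.
  by exists (al 1), (be 1); exact: ex_sol.
split; first exact: lb.
split.
  set X := [set x | _].
  have lbX : lbound X e0 by move=> x [a [b [ps ->]]]; exact: lb.
  have neX : nonempty X by exists (energy Ea Er (al 1) (be 1)), (al 1), (be 1); split => //; exact: ex_sol.
  have hlX : has_lbound X by exists e0.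
  apply/eqP; rewrite eq_le; apply/andP; split; last exact: lb_le_inf.
  apply/ler_addgt0Pr => del del0.
  set Bs := \sum_(i < N) B i in B0 ex_energy *.
  set Cs := \sum_(i < N) C i in C0 ex_energy *.
  pose eps := del / (Bs + Cs + del + 1).
  have D0 : 0 < Bs + Cs + del + 1 by lra.
  have ep : 0 < eps by apply: divr_gt0.
  have eD : eps * (Bs + Cs + del + 1) = del by rewrite /eps divfK // lt0r_neq0.
  have e1 : eps <= 1.
    have : eps * (Bs + Cs + del + 1) <= 1 * (Bs + Cs + del + 1) by rewrite mul1r eD; lra.
    by rewrite ler_pM2r.
  apply: le_trans (ge_inf hlX _) _.
    by exists (al eps), (be eps); split => //; exact: ex_sol.
  rewrite ex_energy.
  have : eps ^+ 2 * Cs <= eps * Cs by rewrite expr2 -mulrA ler_pM2l // -[X in _ <= X]mul1r ler_wpM2r.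
  nra.
have wE : forall eps i, (forall j, Ea i j -> alpha_eps eps i j =
      fam w Delta wb fs Ea (fun i => `|wb - w i| / S i) eps i j) /\
    (forall j, Er i j -> beta_eps eps i j =
      fam w Delta wb gs Er (fun i => `|wb - w i| / S i) eps i j).
  move=> eps i; split => j e.
  - exact: (weps_fam _ _ _ _ _ _ _ _ _ _ _ _ (fn i j e) (dn i) e).
  - exact: (weps_fam _ _ _ _ _ _ _ _ _ _ _ _ (gn i j e) (dn i) e).
have cpos : forall i, 0 < `|wb - w i| / S i by move=> i; exact: divr_gt0.
split.
  move=> eps ep; have [h1 h2] := fam_pos _ eps ep cpos.
  split => i j e; have [wa wr] := wE eps i.
  - by rewrite wa //; exact: h1.
  - by rewrite wr //; exact: h2.
have rhsE : forall eps i, rhs Ea Er Delta fs gs (alpha_eps eps) (beta_eps eps) i =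
    rhs Ea Er Delta fs gs (fam w Delta wb fs Ea (fun i => `|wb - w i| / S i) eps)
                          (fam w Delta wb gs Er (fun i => `|wb - w i| / S i) eps) i.
  move=> eps i; have [wa wr] := wE eps i; rewrite /rhs.
  congr (_ + _); apply: eq_bigr => j e; [by rewrite wa|by rewrite wr].
split.
  move=> i.
  have -> : (fun eps => wb - w i - rhs Ea Er Delta fs gs (alpha_eps eps) (beta_eps eps) i)
      = (fun eps => 0 + (Num.sg (wb - w i) * M i) * eps + 0 * eps ^+ 2).
    apply: funext => eps; rewrite rhsE fam_rhs /= divfK ?Sn // mulrBr sgd; ring.
  exact: poly_lim.
have -> : (fun eps => energy Ea Er (alpha_eps eps) (beta_eps eps))
    = (fun eps => e0 + 0 * eps + (\sum_(i < N) K i) * eps ^+ 2).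
  apply: funext => eps.
  have -> : energy Ea Er (alpha_eps eps) (beta_eps eps) =
      energy Ea Er (fam w Delta wb fs Ea (fun i => `|wb - w i| / S i) eps)
                   (fam w Delta wb gs Er (fun i => `|wb - w i| / S i) eps).
    apply: eq_bigr => i _; have [wa wr] := wE eps i.
    by congr (_ + _); apply: eq_bigr => j e; [rewrite wa|rewrite wr].
  rewrite fam_energy /e0 /E0 mul0r addr0 mulr_suml -big_split /=.
  apply: eq_bigr => i _.
  rewrite -[(wb - w i) ^+ 2](real_normK (num_real _)) -/(S i).
  by field; rewrite Sn.
exact: poly_lim.
Qed.
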